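(* Let indices range over $\{1,\dots,5\}$. Let real numbers $\alpha^{ab}_i$ be given for all pairwise distinct $a,b,i$. Let nonnegative numbers $k^a_{ij}=k^a_{ji}$ be given for pairwise distinct $a,i,j$, and numbers $j_{ai}=j_{ia}$ for $a\ne i$, such that $$\sum_{j\notin\{a,i\}}k^a_{ij}=2j_{ai}.$$ Define $$\alpha^{ai}_{jk}=\alpha^{ai}_j-\alpha^{ai}_k,\qquad \xi^{ab}_i=\alpha^{ab}_i+\alpha^{ba}_i,\qquad \xi^{ij}=\frac13\sum_{k\notin\{i,j\}}\xi^{ij}_k,\qquad \alpha^a_{ij}=\frac16\sum_{b\notin\{i,j,a\}}\big(\alpha^{ai}_{jb}+\alpha^{aj}_{ib}\big),$$ and let $$I=\frac12\sum_{a}\sum_{\substack{i<j\\ i,j\ne a}}k^a_{ij}\big(\alpha^{aj}_i+\alpha^{ai}_j\big)$$ be the imaginary part of the on-shell action. Then $I$ equals the twisted-geometry generalization of the Regge action: $$I=S_{\mathbb T}:=\sum_{i<j}j_{ij}\,\xi^{ij}+\sum_a\sum_{\substack{i<j\\ i,j\ne a}}k^a_{ij}\,\alpha^a_{ij}.$$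
   Context: Geometric interpretation (not needed for the identity): $a=1,\dots,5$ label the tetrahedra of a 4-simplex, and face $(ai)$ of tetrahedron $a$ is glued to face $(ia)$ of tetrahedron $i$. The number $2j_{ai}$ is the area of that shared triangle. The integers $k^a_{ij}$ label the discrete intertwiner at tetrahedron $a$. The angle $\alpha^{ab}_i$ is the angle, in face $b$ of tetrahedron $a$, between the edge $(bi)$ and a reference frame vector. The on-shell value of the action governing the large-spin asymptotics of the 4-simplex amplitude has imaginary part $I$. *)

(* Defs.v *)
(* Indices {1,...,5} are represented by 'I_5 = {0,...,4}. *)
From mathcomp Require Import all_boot all_order all_algebra.
Set Implicit Arguments. Unset Strict Implicit. Unset Printing Implicit Defensive.
Import Order.TTheory GRing.Theory Num.Theory.
Local Open Scope ring_scope.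

Section Defs.
Variable R : realFieldType.
Implicit Types (al k : 'I_5 -> 'I_5 -> 'I_5 -> R) (jj : 'I_5 -> 'I_5 -> R).

(* alpha^{ai}_{jk} = alpha^{ai}_j - alpha^{ai}_k ; al a b i stands for alpha^{ab}_i *)
Definition alpha2 al (a i j k : 'I_5) : R := al a i j - al a i k.

Definition xi3 al (a b i : 'I_5) : R := al a b i + al b a i.

Definition xi2 al (i j : 'I_5) : R :=
  3^-1 * \sum_(k : 'I_5 | (k != i) && (k != j)) xi3 al i j k.

Definition alphaA al (a i j : 'I_5) : R :=
  6^-1 * \sum_(b : 'I_5 | [&& b != i, b != j & b != a])
           (alpha2 al a i j b + alpha2 al a j i b).

Definition ImAction al k : R :=
  2^-1 * \sum_(a : 'I_5) \sum_(i : 'I_5) \sum_(j : 'I_5 | [&& (i < j)%N, i != a & j != a])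
           k a i j * (al a j i + al a i j).

Definition ST al k jj : R :=
  \sum_(i : 'I_5) \sum_(j : 'I_5 | (i < j)%N) jj i j * xi2 al i j
  + \sum_(a : 'I_5) \sum_(i : 'I_5) \sum_(j : 'I_5 | [&& (i < j)%N, i != a & j != a])
           k a i j * alphaA al a i j.

End Defs.

(* Main.v *)
Require Import Defs.
From mathcomp Require Import all_boot all_order all_algebra.
From mathcomp Require Import ring.
Import Order.TTheory GRing.Theory Num.Theory.
Local Open Scope ring_scope.

Notation o0 := (@Ordinal 5 0 isT).
Notation o1 := (@Ordinal 5 1 isT).
Notation o2 := (@Ordinal 5 2 isT).
Notation o3 := (@Ordinal 5 3 isT).
Notation o4 := (@Ordinal 5 4 isT).
Lemma sum5 (R : nmodType) (P : pred 'I_5) (F : 'I_5 -> R) :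
  \sum_(i | P i) F i = (if P o0 then F o0 else 0) + (if P o1 then F o1 else 0)
   + (if P o2 then F o2 else 0) + (if P o3 then F o3 else 0) + (if P o4 then F o4 else 0).
Proof.
rewrite big_mkcond /= !big_ord_recr big_ord0 /= add0r.
by do !congr (_ + _); congr (if P _ then F _ else _); apply: val_inj.
Qed.


Lemma E3 (R : comNzRingType) (F : 'I_5 -> 'I_5 -> 'I_5 -> R) :
  \sum_(a : 'I_5) \sum_(i : 'I_5) \sum_(j : 'I_5 | [&& (i < j)%N, i != a & j != a]) F a i j =
  F o0 o1 o2 + F o0 o1 o3 + F o0 o1 o4 + F o0 o2 o3 + F o0 o2 o4 + F o0 o3 o4 + F o1 o0 o2 + F o1 o0 o3 + F o1 o0 o4 + F o1 o2 o3 + F o1 o2 o4 + F o1 o3 o4 + F o2 o0 o1 + F o2 o0 o3 + F o2 o0 o4 + F o2 o1 o3 + F o2 o1 o4 + F o2 o3 o4 + F o3 o0 o1 + F o3 o0 o2 + F o3 o0 o4 + F o3 o1 o2 + F o3 o1 o4 + F o3 o2 o4 + F o4 o0 o1 + F o4 o0 o2 + F o4 o0 o3 + F o4 o1 o2 + F o4 o1 o3 + F o4 o2 o3.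
Proof.
under eq_bigr => a _ do under eq_bigr => i _ do rewrite sum5.
under eq_bigr => a _ do rewrite sum5.
rewrite sum5 /=; ring.
Qed.

Lemma E2 (R : comNzRingType) (F : 'I_5 -> 'I_5 -> R) :
  \sum_(i : 'I_5) \sum_(j : 'I_5 | (i < j)%N) F i j = F o0 o1 + F o0 o2 + F o0 o3 + F o0 o4 + F o1 o2 + F o1 o3 + F o1 o4 + F o2 o3 + F o2 o4 + F o3 o4.
Proof.
under eq_bigr => i _ do rewrite sum5.
rewrite sum5 /=; ring.
Qed.

Theorem mainTheorem14 (R : realFieldType)
    (al k : 'I_5 -> 'I_5 -> 'I_5 -> R) (jj : 'I_5 -> 'I_5 -> R) :
  (forall a i j : 'I_5, [&& a != i, a != j & i != j] -> 0 <= k a i j) ->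
  (forall a i j : 'I_5, [&& a != i, a != j & i != j] -> k a i j = k a j i) ->
  (forall a i : 'I_5, a != i -> jj a i = jj i a) ->
  (forall a i : 'I_5, a != i ->
     \sum_(j : 'I_5 | (j != a) && (j != i)) k a i j = 2 * jj a i) ->
  ImAction al k = ST al k jj.
Proof.
move=> _ ks js hs.
pose k' (a i m : 'I_5) := if (i < m)%N then k a i m else k a m i.
have hs' : forall a i : 'I_5, a != i -> jj a i =
    2^-1 * \sum_(m : 'I_5 | (m != a) && (m != i)) k' a i m.
  move=> a i ai.
  have t : (2:R) != 0 by rewrite pnatr_eq0.
  have -> : \sum_(m : 'I_5 | (m != a) && (m != i)) k' a i m = 2 * jj a i.
    rewrite -(hs a i ai); apply: eq_bigr => m /andP[ma mi]; rewrite /k'.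
    case: ltnP => // _; symmetry; apply: ks; rewrite ai eq_sym ma eq_sym mi //.
  by rewrite mulrA mulVf ?mul1r.
rewrite /ST /xi2 /xi3.
have e : forall i j : 'I_5, (i < j)%N -> jj i j *
     (3^-1 * \sum_(c : 'I_5 | (c != i) && (c != j)) (al i j c + al j i c)) =
   3^-1 * (2^-1 * (\sum_(m : 'I_5 | (m != i) && (m != j)) k' i j m) * \sum_(c : 'I_5 | (c != i) && (c != j)) al i j c +
           2^-1 * (\sum_(m : 'I_5 | (m != j) && (m != i)) k' j i m) * \sum_(c : 'I_5 | (c != i) && (c != j)) al j i c).
  move=> i j ij; have nij : i != j by rewrite neq_ltn ij.
  rewrite -hs' // -hs' 1?eq_sym //.
  rewrite big_split /= (js i j nij); ring.
under eq_bigr => i _ do under eq_bigr => j ij do rewrite (e i j ij).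
rewrite /ImAction /alphaA /alpha2.
rewrite !E3 E2.
rewrite !sum5 /k' /=.
field.
all: try by rewrite pnatr_eq0.
all: done.
Qed.
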